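(* Let $\mathcal G=(\mathcal V,\mathcal E,W)$ be a network, $h\in\mathbb{R}^{\mathcal V}$, and consider the SNC game with binary actions on $\mathcal G$ with external field $h$, with set of Nash equilibria $\mathcal N$. Let $\mathcal V=\mathcal R\cup\mathcal S$, $\mathcal R\cap\mathcal S=\emptyset$, be a binary partition such that both $\mathcal G_{\mathcal R}$ and $\mathcal G_{\mathcal S}$ are structurally balanced. If there exists $\tau\in\{\pm1\}^{\mathcal R}$ such that $\tau_iW_{ij}\tau_j\ge0$ for all $i,j\in\mathcal R$ and $w_i^{\mathcal R}+\tau_ih_i\ge w_i^{\mathcal S}$ for all $i\in\mathcal R$, then there exists a Nash equilibrium $x^*\in\mathcal N$ with $x^*_{\mathcal R}=\tau$.
   Context: A network is a triple $\mathcal G=(\mathcal V,\mathcal E,W)$ where $\mathcal V$ is a finite nonempty set, $\mathcal E\subseteq\mathcal V\times\mathcal V$, and $W\in\mathbb{R}^{\mathcal V\times\mathcal V}$ has zero diagonal and satisfies $W_{ij}\neq0$ iff $(i,j)\in\mathcal E$ (weights may have either sign). For $\mathcal U\subseteq\mathcal V$, the subnetwork $\mathcal G_{\mathcal U}$ has node set $\mathcal U$, links $\mathcal E\cap(\mathcal U\times\mathcal U)$ and weight matrix $W_{\mathcal U\mathcal U}$. A network is structurally balanced if its node set can be written as a disjoint union of two sets with nonnegative weights on links within each set and nonpositive weights on links between the two sets. For $i\in\mathcal V$ and $\mathcal B\subseteq\mathcal V$, $w_i^{\mathcal B}=\sum_{j\in\mathcal B}|W_{ij}|$. The SNC game with binary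 actions on $\mathcal G$ with external field $h\in\mathbb{R}^{\mathcal V}$ has player set $\mathcal V$, action set $\{-1,+1\}$ for each player, strategy profiles $\mathcal X=\{\pm1\}^{\mathcal V}$, and utilities $u_i(x)=h_ix_i+x_i\sum_{j\in\mathcal V}W_{ij}x_j$. A Nash equilibrium is $x^*$ with $x^*_i\in\arg\max_{a\in\{\pm1\}}u_i(a,x^*_{-i})$ for all $i$. *)

(* Defs.v *)
From mathcomp Require Import all_boot all_order all_algebra.
Set Implicit Arguments. Unset Strict Implicit. Unset Printing Implicit Defensive.
Import Order.TTheory GRing.Theory Num.Theory.
Local Open Scope ring_scope.

Section SNC.
Variables (R : realFieldType) (V : finType).

(* A network on node set V is given by its weight matrix W : V -> V -> R with
   zero diagonal; the link set is the support {(i,j) | W i j != 0}. *)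
Definition zero_diag (W : V -> V -> R) : Prop := forall i, W i i = 0.

Definition struct_balanced (W : V -> V -> R) (U : {set V}) : Prop :=
  exists A : {set V}, A \subset U /\
    forall i j, i \in U -> j \in U ->
      if (i \in A) == (j \in A) then 0 <= W i j else W i j <= 0.

Definition wdeg (W : V -> V -> R) (i : V) (B : {set V}) : R :=
  \sum_(j in B) `|W i j|.

Definition is_pm1 (a : R) : Prop := a = 1 \/ a = -1.

Definition profile (x : V -> R) : Prop := forall i, is_pm1 (x i).

Definition utility (W : V -> V -> R) (h : V -> R) (i : V) (x : V -> R) : R :=
  h i * x i + x i * \sum_(j : V) W i j * x j.

Definition upd (x : V -> R) (i : V) (a : R) : V -> R :=
  fun j => if j == i then a else x j.

Definition nash_eq (W : V -> V -> R) (h : V -> R) (x : V -> R) : Prop :=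
  profile x /\
  forall i a, is_pm1 a -> utility W h i (upd x i a) <= utility W h i x.

End SNC.

(* Main.v *)
Require Import Defs.
From mathcomp Require Import all_boot all_order all_algebra.
From mathcomp Require Import lra.
Import Order.TTheory GRing.Theory Num.Theory.
Local Open Scope ring_scope.

Lemma util_upd (R : realFieldType) (V : finType) (W : V -> V -> R) (h : V -> R)
  (x : V -> R) i a : zero_diag W ->
  utility W h i (upd x i a) = a * (h i + \sum_j W i j * x j).
Proof.
move=> zd; rewrite /utility /upd eqxx.
have -> : \sum_j W i j * (if j == i then a else x j) = \sum_j W i j * x j.
  rewrite (bigD1 i) //= [in RHS](bigD1 i) //= zd !mul0r !add0r.
  by apply: eq_bigr => j /negPf ->.
by rewrite mulrDr mulrC.
Qed.

Lemma util_self (R : realFieldType) (V : finType) (W : V -> V -> R) (h : V -> R)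
  (x : V -> R) i : utility W h i x = x i * (h i + \sum_j W i j * x j).
Proof. by rewrite /utility mulrDr mulrC. Qed.

Lemma pm1_br (R : realFieldType) (a b F : R) : is_pm1 a -> is_pm1 b ->
  0 <= b * F -> a * F <= b * F.
Proof.
by case=> ->; case=> -> H; rewrite ?lexx //; move: H; rewrite !mulN1r !mul1r; lra.
Qed.

Theorem corollary1 (R : realFieldType) (V : finType) (W : V -> V -> R)
    (h : V -> R) (Rs : {set V}) (tau : V -> R) :
  (0 < #|V|)%N ->
  zero_diag W ->
  struct_balanced W Rs ->
  struct_balanced W (~: Rs) ->
  (forall i, i \in Rs -> is_pm1 (tau i)) ->
  (forall i j, i \in Rs -> j \in Rs -> 0 <= tau i * W i j * tau j) ->
  (forall i, i \in Rs -> wdeg W i (~: Rs) <= wdeg W i Rs + tau i * h i) ->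
  exists x : V -> R, nash_eq W h x /\ (forall i, i \in Rs -> x i = tau i).
Proof.
move=> _ zd _ [A [sA bal]] taupm taupos hw.
pose sg := fun j : V => (if j \in A then 1 else -1) : R.
have sgpm : forall j, is_pm1 (sg j) by move=> j; rewrite /sg; case: ifP; [left|right].
have sgpos : forall i j, i \in ~: Rs -> j \in ~: Rs -> 0 <= sg i * W i j * sg j.
  move=> i j iS jS; have := bal i j iS jS; rewrite /sg.
  by case: (i \in A); case: (j \in A) => /= H; rewrite ?mul1r ?mulr1 ?mulN1r ?mulrN1 ?opprK //;
    rewrite oppr_ge0.
pose xP := fun (P : {set V}) (j : V) =>
  if j \in Rs then tau j else sg j * (if j \in P then 1 else -1).
pose F := fun (x : V -> R) (i : V) => h i + \sum_j W i j * x j.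
have mono : forall (P P' : {set V}) i, P \subset P' -> i \in ~: Rs ->
    sg i * F (xP P) i <= sg i * F (xP P') i.
  move=> P P' i sPP' iS; rewrite /F !mulrDr lerD2l !mulr_sumr; apply: ler_sum => j _.
  rewrite /xP; case: ifP => jR; first by rewrite lexx.
  have jS : j \in ~: Rs by rewrite in_setC jR.
  have c0 := sgpos i j iS jS.
  rewrite !mulrA.
  case: ifP => jP; first by rewrite (subsetP sPP' j jP).
  case: ifP => jP'; first by rewrite mulr1 mulrN1 -subr_ge0 opprK -mulr2n mulrn_wge0.
  by rewrite lexx.
pose ok := fun P : {set V} => (P \subset ~: Rs) && [forall i in P, 0 <= sg i * F (xP P) i].
have ok0 : ok set0 by rewrite /ok sub0set; apply/forallP => i; rewrite in_set0.
case: (@arg_maxnP _ set0 ok (fun P : {set V} => #|P|) ok0) => P okP maxP.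
move/andP: okP => [sPS /forall_inP subP].
have xpm : forall j, is_pm1 (xP P j).
  move=> j; rewrite /xP; case: ifP => jR; first exact: taupm.
  by case: (sgpm j) => ->; case: ifP; rewrite ?mulr1 ?mulrN1 ?opprK; by [left|right].
exists (xP P); split; last by move=> i iR; rewrite /xP iR.
split=> // i a apm.
rewrite util_upd // util_self; apply: pm1_br => //.
have Hi : 0 <= xP P i * F (xP P) i; last by [].
case iR: (i \in Rs).
- rewrite /xP iR /F mulrDr [X in _ + X]mulr_sumr (bigID (fun j => j \in Rs)) /=.
  have H1 : \sum_(j | j \in Rs) tau i * (W i j * xP P j) = wdeg W i Rs.
    rewrite /wdeg big_mkcond /= [RHS]big_mkcond /=; apply: eq_bigr => j _.
    case: ifP => jR //; rewrite /xP jR mulrA -(ger0_norm (taupos i j iR jR)).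
    rewrite !normrM; case: (taupm i iR) => ->; case: (taupm j jR) => ->;
    by rewrite ?normrN normr1 ?mul1r ?mulr1.
  have H2 : - wdeg W i (~: Rs) <= \sum_(j | j \notin Rs) tau i * (W i j * xP P j).
    rewrite /wdeg -sumrN big_mkcond /= [X in _ <= X]big_mkcond /=; apply: ler_sum => j _.
    rewrite in_setC; case: ifP => jR //=.
    have -> : `|W i j| = `|tau i * (W i j * xP P j)|.
      rewrite !normrM; case: (taupm i iR) => ->; case: (xpm j) => ->;
      by rewrite ?normrN normr1 ?mul1r ?mulr1.
    by rewrite lerNl -normrN ler_norm.
  have := hw i iR; rewrite H1 mulrC; lra.
- have iS : i \in ~: Rs by rewrite in_setC iR.
  rewrite {1}/xP iR; case: ifP => iP.
    by rewrite mulr1; apply: subP.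
  rewrite mulrN1 mulNr oppr_ge0; rewrite leNgt; apply/negP => Hpos.
  have okP' : ok (i |: P).
    apply/andP; split; first by rewrite subUset sub1set iS sPS.
    apply/forall_inP => j; rewrite in_setU1 => /orP [/eqP -> | jP].
      apply: le_trans (ltW Hpos) _; apply: mono => //; exact: subsetUr.
    apply: le_trans (subP j jP) _; apply: mono; first exact: subsetUr.
    exact: (subsetP sPS).
  by have := maxP _ okP'; rewrite cardsU1 iP /= add1n ltnn.
Qed.
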